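(* For every positive integer $r$, each column of the matrix $S_r$ has exactly $2^{r-1}$ entries equal to $1$, and each row of $S_r$ has exactly $2^r-1$ entries equal to $1$.
   Context: Define $\{0,1\}$-matrices $S_r$ recursively. Let $S_1=I_2$. For $r\ge1$ let $F_r=I_{2^r-1}\otimes\begin{pmatrix}0&1\\1&0\end{pmatrix}$, and let $1_r$, $0_r$ denote the $2^r\times1$ all-ones and all-zeros column vectors. For $r\ge2$ set $S_r=\big(B_r^{(i)}\ B_r^{(ii)}\ B_r^{(iii)}\big)$ (horizontal concatenation) with $$B_r^{(i)}=\begin{pmatrix}1_{r-1}&0_{r-1}\\0_{r-1}&1_{r-1}\end{pmatrix},\quad B_r^{(ii)}=\begin{pmatrix}S_{r-1}\\S_{r-1}\end{pmatrix},\quad B_r^{(iii)}=\begin{pmatrix}S_{r-1}\\S_{r-1}F_{r-1}\end{pmatrix}.$$ Then $S_r$ has $2^r$ rows and $c_r=2^{r+1}-2$ columns. *)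

(* Defs.v *)
From mathcomp Require Import all_boot all_order all_algebra.
Set Implicit Arguments. Unset Strict Implicit. Unset Printing Implicit Defensive.
Import GRing.Theory.
Local Open Scope ring_scope.

(* Index shift: for n : nat, the level is r = n.+1.
   srows n = number of rows of S_(n+1)   (= 2^(n+1)),
   scols n = number of columns of S_(n+1) (= 2^(n+2) - 2 = c_(n+1)).
   They are defined recursively so that the block concatenations typecheck. *)
Fixpoint srows (n : nat) : nat :=
  match n with 0 => 2 | n'.+1 => (srows n' + srows n')%N end.
Fixpoint scols (n : nat) : nat :=
  match n with 0 => 2 | n'.+1 => (2 + (scols n' + scols n'))%N end.

(* F_r = I_{2^r - 1} (x) [[0,1],[1,0]] written entrywise (Kronecker product):
   entry (2a+b, 2a'+b') = delta_{a a'} * [b != b']. Its size is 2^(r+1)-2 = c_r. *)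
Definition Fmx (m : nat) : 'M[int]_m :=
  \matrix_(k < m, l < m) ((k %/ 2 == l %/ 2)%N && (k != l :> nat))%:R.

Definition Bi (h : nat) : 'M[int]_(h + h, 2) :=
  col_mx (\matrix_(i < h, j < 2) (j == 0 :> nat)%:R)
         (\matrix_(i < h, j < 2) (j == 1 :> nat)%:R).

Fixpoint Smx (n : nat) : 'M[int]_(srows n, scols n) :=
  match n return 'M[int]_(srows n, scols n) with
  | 0 => 1%:M
  | n'.+1 =>
      let S := Smx n' in
      row_mx (Bi (srows n'))
        (row_mx (col_mx S S) (col_mx S (S *m Fmx (scols n'))))
  end.

Definition S (r : nat) : 'M[int]_(srows r.-1, scols r.-1) := Smx r.-1.

(* Main.v *)
Require Import Defs.
From mathcomp Require Import all_boot all_order all_algebra zify.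
Set Implicit Arguments. Unset Strict Implicit. Unset Printing Implicit Defensive.
Import GRing.Theory.
Local Open Scope ring_scope.

Lemma srowsE n : srows n = (2 ^ n.+1)%N.
Proof. by elim: n => //= n ->; rewrite addnn -mul2n -expnS. Qed.

Lemma scols_even n : ~~ odd (scols n).
Proof. by elim: n => //= n _; rewrite addnn odd_double. Qed.

Definition pn (j : nat) := if odd j then j.-1 else j.+1.

Lemma pn_lt m (Hm : ~~ odd m) (j : 'I_m) : (pn j < m)%N.
Proof.
rewrite /pn; case: ifP => ho.
  by apply: leq_ltn_trans (ltn_ord j); apply: leq_pred.
rewrite ltn_neqAle ltn_ord andbT; apply/eqP => e.
by move: Hm; rewrite -e /= ho.
Qed.

Definition pj m (Hm : ~~ odd m) (j : 'I_m) : 'I_m := Ordinal (pn_lt Hm j).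

Lemma partner_spec (j k : nat) :
  ((k %/ 2 == j %/ 2)%N && (k != j)) = (k == pn j).
Proof.
rewrite /pn; case: ifP => ho.
  have h : (j %% 2 = 1)%N by rewrite modn2 ho.
  apply/idP/eqP => [/andP[/eqP h1 /eqP h2]|->]; [lia|apply/andP; split; apply/eqP; lia].
have h : (j %% 2 = 0)%N by rewrite modn2 ho.
apply/idP/eqP => [/andP[/eqP h1 /eqP h2]|->]; [lia|apply/andP; split; apply/eqP; lia].
Qed.

Lemma mulF h m (Hm : ~~ odd m) (A : 'M[int]_(h, m)) i j :
  (A *m Fmx m) i j = A i (pj Hm j).
Proof.
rewrite !mxE (bigD1 (pj Hm j)) //= big1 ?addr0.
  by rewrite mxE partner_spec eqxx mulr1.
move=> k hk; rewrite mxE partner_spec.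
have -> : (nat_of_ord k == pn j) = false by apply/negbTE.
by rewrite mulr0.
Qed.

Lemma card_split a b (P : pred 'I_(a+b)) :
  #|[set x | P x]| = (#|[set x : 'I_a | P (lshift b x)]| + #|[set x : 'I_b | P (rshift a x)]|)%N.
Proof.
rewrite !cardE !size_filter -!sum1_count.
rewrite big_mkcond big_split_ord /=.
by congr (_ + _); rewrite [RHS]big_mkcond /=; apply: eq_bigr => i _; rewrite !inE.
Qed.

Lemma ord_split a b (P : 'I_(a+b) -> Prop) :
  (forall x, P (lshift b x)) -> (forall y, P (rshift a y)) -> forall j, P j.
Proof. by move=> h1 h2 j; rewrite -(splitK j); case: (split j). Qed.


Lemma pn_inv j : pn (pn j) = j.
Proof.
rewrite /pn; case: j => [|j] //=.
by case: (boolP (odd j)) => h /=; rewrite ?h ?(negbTE h).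
Qed.

Lemma pj_inj m (Hm : ~~ odd m) : injective (pj Hm).
Proof.
apply: (can_inj (g := pj Hm)) => j; apply/val_inj => /=; exact: pn_inv.
Qed.

Lemma SmxS n : Smx n.+1 = row_mx (Bi (srows n))
        (row_mx (col_mx (Smx n) (Smx n)) (col_mx (Smx n) (Smx n *m Fmx (scols n)))).
Proof. by []. Qed.

Lemma cardb (T : finType) (b : bool) : #|[set _ : T | b]| = if b then #|T| else 0%N.
Proof.
case: b.
  by rewrite -cardsT; congr #|_|; apply/setP => x; rewrite !inE.
by rewrite -(cards0 T); congr #|_|; apply/setP => x; rewrite !inE.
Qed.

Section E.
Variable n : nat.
Let h := srows n.
Let m := scols n.
Lemma E1 (i : 'I_(h + h)) (j : 'I_2) : Smx n.+1 i (lshift (m + m) j) = Bi h i j.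
Proof. exact: row_mxEl. Qed.
Lemma E2 (i : 'I_h) (j : 'I_m) : Smx n.+1 (lshift h i) (rshift 2 (lshift m j)) = Smx n i j.
Proof. by rewrite [LHS]row_mxEr row_mxEl col_mxEu. Qed.
Lemma E3 (i : 'I_h) (j : 'I_m) : Smx n.+1 (rshift h i) (rshift 2 (lshift m j)) = Smx n i j.
Proof. by rewrite [LHS]row_mxEr row_mxEl col_mxEd. Qed.
Lemma E4 (i : 'I_h) (j : 'I_m) : Smx n.+1 (lshift h i) (rshift 2 (rshift m j)) = Smx n i j.
Proof. by rewrite [LHS]row_mxEr row_mxEr col_mxEu. Qed.
Lemma E5 (i : 'I_h) (j : 'I_m) : Smx n.+1 (rshift h i) (rshift 2 (rshift m j)) = (Smx n *m Fmx m) i j.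
Proof. by rewrite [LHS]row_mxEr row_mxEr col_mxEd. Qed.
Lemma B1 (i : 'I_h) (j : 'I_2) : Bi h (lshift h i) j = (j == 0 :> nat)%:R.
Proof. by rewrite /Bi col_mxEu mxE. Qed.
Lemma B2 (i : 'I_h) (j : 'I_2) : Bi h (rshift h i) j = (j == 1 :> nat)%:R.
Proof. by rewrite /Bi col_mxEd mxE. Qed.
End E.

Lemma main n :
  (forall j, #|[set i | Smx n i j == 1]| = 2 ^ n)%N /\
  (forall i, #|[set j | Smx n i j == 1]| = 2 ^ n.+1 - 1)%N.
Proof.
elim: n => [|n [IHc IHr]].
  split=> k; rewrite cardE size_filter -sum1_count big_mkcond /=
    !big_ord_recr big_ord0 /= !inE !mxE; case: k => [[|[|//]] ?] //=.
pose Hm := scols_even n.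
have cF : forall j, #|[set i | (Smx n *m Fmx (scols n)) i j == 1]| = (2 ^ n)%N.
  by move=> j; rewrite -(IHc (pj Hm j)); apply: eq_card => i; rewrite !inE mulF.
have rF : forall i, #|[set j | (Smx n *m Fmx (scols n)) i j == 1]| = (2 ^ n.+1 - 1)%N.
  move=> i; rewrite -(IHr i).
  have -> : [set j | (Smx n *m Fmx (scols n)) i j == 1] = pj Hm @^-1: [set j | Smx n i j == 1].
    by apply/setP => j; rewrite !inE mulF.
  exact/card_preimset/pj_inj.
have e2 : (2 ^ n.+1 = 2 ^ n + 2 ^ n)%N by rewrite expnS; lia.
have e3 : (0 < 2 ^ n)%N by rewrite expn_gt0.
have e4 : (2 ^ n.+2 = 2 ^ n.+1 + 2 ^ n.+1)%N by rewrite (expnS 2 n.+1); lia.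
split.
  apply: (@ord_split 2 (scols n + scols n)) => [j|j].
    rewrite (@card_split (srows n) (srows n)).
    under eq_finset => x do rewrite E1 B1.
    under [X in (_ + #|pred_of_set X|)%N]eq_finset => x do rewrite E1 B2.
    case: j => [[|[|//]] ?] /=; rewrite !cardb /= card_ord srowsE; lia.
  move: j; apply: (@ord_split (scols n) (scols n)) => [j|j].
    rewrite (@card_split (srows n) (srows n)).
    under eq_finset => x do rewrite E2.
    under [X in (_ + #|pred_of_set X|)%N]eq_finset => x do rewrite E3.
    by rewrite !IHc.
  rewrite (@card_split (srows n) (srows n)).
  under eq_finset => x do rewrite E4.
  under [X in (_ + #|pred_of_set X|)%N]eq_finset => x do rewrite E5.
  by rewrite IHc cF.
apply: (@ord_split (srows n) (srows n)) => i.
  rewrite (@card_split 2 (scols n + scols n)) (@card_split (scols n) (scols n)).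
  under eq_finset => x do rewrite E1 B1.
  under [X in (_ + (#|pred_of_set X| + _))%N]eq_finset => x do rewrite E2.
  under [X in (_ + (_ + #|pred_of_set X|))%N]eq_finset => x do rewrite E4.
  rewrite !IHr.
  rewrite (_ : [set _ | _] = [set ord0]) ?cards1; last first.
    by apply/setP => x; rewrite !inE; case: x => [[|[|//]] ?].
  lia.
rewrite (@card_split 2 (scols n + scols n)) (@card_split (scols n) (scols n)).
under eq_finset => x do rewrite E1 B2.
under [X in (_ + (#|pred_of_set X| + _))%N]eq_finset => x do rewrite E3.
under [X in (_ + (_ + #|pred_of_set X|))%N]eq_finset => x do rewrite E5.
rewrite IHr rF.
rewrite (_ : [set _ | _] = [set ord_max]) ?cards1; last first.
  by apply/setP => x; rewrite !inE; case: x => [[|[|//]] ?].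
lia.
Qed.

Theorem lemma4p2 (r : nat) (hr : (0 < r)%N) :
  (forall j : 'I_(scols r.-1),
      #|[set i : 'I_(srows r.-1) | S r i j == 1]| = (2 ^ r.-1)%N) /\
  (forall i : 'I_(srows r.-1),
      #|[set j : 'I_(scols r.-1) | S r i j == 1]| = (2 ^ r - 1)%N).
Proof. by case: r hr => // n _; exact: main. Qed.
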